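(* Let $M$ be a free $\mathbb{Z}$-module of finite rank $m$, let $\beta$ be a $\mathbb{Z}$-basis of $M$, and let $\varphi\in\operatorname{End}_{\mathbb{Z}}(M)$. Regard $M$ as a $\mathbb{Z}[x]$-module via $x\cdot v=\varphi(v)$. Then $M$ has rational canonical form over $\mathbb{Z}$ if and only if the matrix $A(x)=xI_m-[\varphi]_\beta\in\mathbb{Z}[x]^{m\times m}$ has Smith normal form over $\mathbb{Z}[x]$.
   Context: A matrix $A\in R^{m\times n}$ over a commutative ring $R$ has Smith normal form (SNF) over $R$ if there exist invertible $P\in R^{m\times m}$, $Q\in R^{n\times n}$ such that $B=PAQ$ satisfies $b_{ij}=0$ for $i\ne j$ and the diagonal entries $s_i=b_{ii}$ ($1\le i\le\min\{m,n\}$) satisfy $s_1\mid s_2\mid\cdots\mid s_{\min\{m,n\}}$. $[\varphi]_\beta$ denotes the matrix of $\varphi$ in the basis $\beta$. A $\mathbb{Z}[x]$-module $M$ that is free of finite rank over $\mathbb{Z}$ has rational canonical form (RCF) over $\mathbb{Z}$ if there exist cyclic $\mathbb{Z}[x]$-submodules $V_1,\dots,V_k$ of $M$ with $M=V_1\oplus\cdots\oplus V_k$, such that $\operatorname{Ann}(V_i)=(a_i(x))$ with each $a_i(x)\in\mathbb{Z}[x]$ monic and non-constant and $a_1(x)\mid a_2(x)\mid\cdots\mid a_k(x)$. An endomorphism $\varphi$ of a free $\mathbb{Z}$-module of finite rank has RCF over $\mathbb{Z}$ if the associated $\mathbb{Z}[x]$-module (with $x$ acting by $\varphi$) has RCF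 over $\mathbb{Z}$. *)

(* Defs.v *)
From HB Require Import structures.
From mathcomp Require Import all_boot all_order all_algebra.
Set Implicit Arguments. Unset Strict Implicit. Unset Printing Implicit Defensive.
Import GRing.Theory.
Local Open Scope ring_scope.

(* Genuine divisibility in a commutative ring: a | b iff b = c * a for some c.
   (Not polydiv's pseudo-divisibility.) *)
Definition divides (R : comPzRingType) (a b : R) : Prop := exists c : R, b = c * a.

Definition is_Zbasis (V : zmodType) (m : nat) (b : 'I_m -> V) : Prop :=
  (forall v : V, exists c : 'I_m -> int, v = \sum_(i < m) b i *~ c i) /\
  (forall c c' : 'I_m -> int,
      \sum_(i < m) b i *~ c i = \sum_(i < m) b i *~ c' i -> forall i, c i = c' i).

Definition is_matrix_of (V : zmodType) (m : nat) (b : 'I_m -> V) (phi : V -> V)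
    (A : 'M[int]_m) : Prop :=
  forall j : 'I_m, phi (b j) = \sum_(i < m) b i *~ A i j.

(* Z[x]-module structure on V given by x . v = phi v : p . v = sum_j p_j phi^j(v). *)
Definition polyact (V : zmodType) (phi : V -> V) (p : {poly int}) (v : V) : V :=
  \sum_(j < size p) (iter j phi v) *~ p`_j.

(* Rational canonical form over Z: V = V_1 (+) ... (+) V_k with V_i = Z[x] g_i cyclic,
   Ann(V_i) = (a_i), a_i monic non-constant, a_1 | a_2 | ... | a_k. *)
Definition has_RCF (V : zmodType) (phi : V -> V) : Prop :=
  exists (k : nat) (g : 'I_k -> V) (a : 'I_k -> {poly int}),
    [/\ forall i, (a i \is monic) /\ (1 < size (a i))%N,
        forall i j : 'I_k, nat_of_ord j = (nat_of_ord i).+1 -> divides (a i) (a j),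
        forall i (p : {poly int}),
          (forall q : {poly int}, polyact phi p (polyact phi q (g i)) = 0)
          <-> divides (a i) p,
        forall v : V, exists ps : 'I_k -> {poly int},
          v = \sum_(i < k) polyact phi (ps i) (g i)
      & forall ps qs : 'I_k -> {poly int},
          \sum_(i < k) polyact phi (ps i) (g i) = \sum_(i < k) polyact phi (qs i) (g i) ->
          forall i, polyact phi (ps i) (g i) = polyact phi (qs i) (g i)].

Definition has_SNF (R : comUnitRingType) (n : nat) (A : 'M[R]_n) : Prop :=
  exists P Q : 'M[R]_n,
    [/\ P \in unitmx, Q \in unitmx,
        forall i j : 'I_n, i != j -> (P *m A *m Q) i j = 0
      & forall i j : 'I_n, nat_of_ord j = (nat_of_ord i).+1 ->
          divides ((P *m A *m Q) i i) ((P *m A *m Q) j j)].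

(* Main.v *)
Require Import Defs.
From HB Require Import structures.
From mathcomp Require Import all_boot all_order all_algebra.
From Stdlib Require Import ClassicalEpsilon.
Set Implicit Arguments. Unset Strict Implicit. Unset Printing Implicit Defensive.
Import GRing.Theory.
Section Comb.
Variable k : nat.
Variable e : 'I_k -> nat.
Definition en (j : nat) : nat := \sum_(i < k | val i == j) e i.
Definition on (n : nat) : nat := \sum_(0 <= j < n) en j.
Definition oo (i : 'I_k) := on i.
Definition JJ := on k.

Lemma en_ord (i : 'I_k) : en i = e i.
Proof.
by rewrite /en (eq_bigl (fun j => j == i)) ?big_pred1_eq.
Qed.

Lemma en_out j : (k <= j)%N -> en j = 0%N.
Proof.
move=> hj; rewrite /en big_pred0 // => i; apply/negbTE.
by apply: contraTneq (ltn_ord i) => ->; rewrite -leqNgt.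
Qed.

Lemma onS n : on n.+1 = (on n + en n)%N.
Proof. by rewrite /on big_nat_recr. Qed.

Lemma on_mono i j : (i <= j)%N -> (on i <= on j)%N.
Proof. by move=> h; rewrite /on (big_cat_nat (leq0n i) h) leq_addr. Qed.

Lemma oo_lt (i : 'I_k) t : (t < e i)%N -> (oo i + t < JJ)%N.
Proof.
move=> ht; apply: (@leq_trans (on i.+1)); last exact: on_mono.
by rewrite onS en_ord /oo ltn_add2l.
Qed.

Lemma oo_inj (i i' : 'I_k) t t' : (t < e i)%N -> (t' < e i')%N ->
  (oo i + t = oo i' + t')%N -> i = i' /\ t = t'.
Proof.
have key : forall (i i' : 'I_k) t t', (t < e i)%N -> (i < i')%N ->
    (oo i + t < oo i' + t')%N.
  move=> {i i' t t'} i i' t t' ht hii; apply: (@leq_trans (on i.+1)).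
    by rewrite onS en_ord /oo ltn_add2l.
  by apply: leq_trans (leq_addr _ _); apply: on_mono.
move=> ht ht' h.
case: (ltngtP i i') => [hl|hl|hv].
- by have := key _ _ _ t' ht hl; rewrite h ltnn.
- by have := key _ _ _ t ht' hl; rewrite h ltnn.
have ei : i = i' by apply: val_inj.
by subst i'; split=> //; apply/eqP; rewrite -(eqn_add2l (oo i)) h.
Qed.

Lemma big_on (R : Type) (idx : R) (op : Monoid.law idx) (F : nat -> R) n :
  \big[op/idx]_(0 <= l < on n) F l =
  \big[op/idx]_(0 <= i < n) \big[op/idx]_(0 <= t < en i) F (on i + t)%N.
Proof.
elim: n => [|n IH]; first by rewrite /on !big_geq.
rewrite big_nat_recr //= -IH onS (big_cat_nat (leq0n _) (leq_addr (en n) _)).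
congr (op _ _); rewrite -{1}(add0n (on n)) big_addn.
have -> : (on n + en n - on n = en n)%N by rewrite addKn.
by apply: eq_bigr => t _; rewrite addnC.
Qed.

Lemma R1 (R : Type) (idx : R) (op : Monoid.com_law idx) (F : nat -> R) :
  \big[op/idx]_(l < JJ + k) F l =
  \big[op/idx]_(i < k) op (\big[op/idx]_(t < e i) F (oo i + t)%N) (F (JJ + i)%N).
Proof.
have -> : \big[op/idx]_(l < JJ + k) F l = \big[op/idx]_(0 <= l < JJ + k) F l.
  by rewrite big_mkord.
rewrite big_split /= (big_cat_nat (leq0n JJ) (leq_addr _ _)) /=.
congr (op _ _).
  rewrite /JJ big_on big_mkord; apply: eq_bigr => i _.
  by rewrite en_ord big_mkord.
rewrite -{1}(add0n JJ) big_addn.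
have -> : (JJ + k - JJ = k)%N by rewrite addKn.
rewrite big_mkord.
by apply: eq_bigr => i _; rewrite addnC.
Qed.

End Comb.

Local Open Scope ring_scope.

Section BasisChange.
Variable V : zmodType.

Lemma coords n p (be : 'I_n -> V) (ga : 'I_p -> V) : is_Zbasis be ->
  exists M : 'M[int]_(n, p), forall j, ga j = \sum_i be i *~ M i j.
Proof.
move=> [hs _].
have /all_sig [f hf] : forall j, {c : 'I_n -> int | ga j = \sum_i be i *~ c i}.
  by move=> j; apply: constructive_indefinite_description; apply: hs.
by exists (\matrix_(i, j) f j i) => j; rewrite hf; apply: eq_bigr => i _; rewrite mxE.
Qed.

Lemma comp_coords n p q (be : 'I_n -> V) (ga : 'I_p -> V) (de : 'I_q -> V)
   (M1 : 'M[int]_(n, p)) (M2 : 'M[int]_(p, q)) :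
  (forall j, ga j = \sum_i be i *~ M1 i j) ->
  (forall j, de j = \sum_i ga i *~ M2 i j) ->
  forall j, de j = \sum_i be i *~ (M1 *m M2) i j.
Proof.
move=> h1 h2 j; rewrite h2; under eq_bigr => l _ do rewrite h1 mulrz_suml.
rewrite exchange_big /=; apply: eq_bigr => i _; rewrite mxE mulrz_sumr.
by apply: eq_bigr => l _; rewrite mulrzA.
Qed.

Lemma basis_id n (be : 'I_n -> V) (M : 'M[int]_n) : is_Zbasis be ->
  (forall j, be j = \sum_i be i *~ M i j) -> M = 1%:M.
Proof.
move=> [_ hi] h; apply/matrixP => i j.
have e : \sum_l be l *~ M l j = \sum_l be l *~ (l == j)%:R.
  by rewrite -h (bigD1 j) //= big1 ?addr0 ?eqxx // => l /negbTE ->.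
by rewrite (hi _ _ e i) !mxE.
Qed.

Lemma rank_le n p (M1 : 'M[int]_(n, p)) (M2 : 'M[int]_(p, n)) :
  M1 *m M2 = 1%:M -> (n <= p)%N.
Proof.
move=> h; have : map_mx (intr : int -> rat) (M1 *m M2) = 1%:M by rewrite h map_mx1.
rewrite map_mxM => h'.
have := mxrankM_maxl (map_mx (intr : int -> rat) M1) (map_mx (intr : int -> rat) M2).
by rewrite h' mxrank1 => /leq_trans; apply; apply: rank_leq_col.
Qed.

Lemma basis_size n p (be : 'I_n -> V) (ga : 'I_p -> V) :
  is_Zbasis be -> is_Zbasis ga -> n = p.
Proof.
move=> hb hg.
have [M1 h1] := coords ga hb. have [M2 h2] := coords be hg.
have e1 := basis_id hb (comp_coords h1 h2).
have e2 := basis_id hg (comp_coords h2 h1).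
by apply/eqP; rewrite eqn_leq (rank_le e1) (rank_le e2).
Qed.

End BasisChange.

Lemma cols_factor (R : comUnitRingType) n (L D : 'M[R]_n) :
  (forall j : 'I_n, exists w, L *m delta_mx j (0 : 'I_1) = D *m w) ->
  exists X, L = D *m X.
Proof.
move=> h; have /all_sig [f hf] : forall j : 'I_n, {w : 'cV[R]_n | L *m delta_mx j (0 : 'I_1) = D *m w}.
  by move=> j; apply: constructive_indefinite_description.
exists (\matrix_(i, j) f j i 0); apply/matrixP => i j.
have := congr1 (fun M : 'cV[R]_n => M i 0) (hf j); rewrite -colE mxE => ->.
by rewrite !mxE; apply: eq_bigr => k _; rewrite mxE.
Qed.

Lemma equiv_images (R : idomainType) n (T D P : 'M[{poly R}]_n) :
  P \in unitmx -> \det T != 0 ->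
  (forall w : 'cV[{poly R}]_n, exists w' : 'cV[{poly R}]_n, P *m (T *m w) = D *m w') ->
  (forall w : 'cV[{poly R}]_n, exists w' : 'cV[{poly R}]_n, D *m w = P *m (T *m w')) ->
  exists Q, Q \in unitmx /\ P *m T *m Q = D.
Proof.
move=> Pu dT h1 h2.
have [X hX] : exists X, P *m T = D *m X.
  by apply: cols_factor => j; rewrite -mulmxA; apply: h1.
have [Y hY] : exists Y, D = P *m T *m Y.
  apply: cols_factor => j; have [w' ->] := h2 (delta_mx j 0).
  by exists w'; rewrite mulmxA.
have dPT : \det (P *m T) != 0.
  rewrite det_mulmx mulf_eq0 negb_or dT andbT.
  by apply: contraTneq Pu => h; rewrite unitmxE h unitr0.
have YX : Y *m X = 1%:M.
  have e : P *m T *m (1%:M - Y *m X) = 0.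
    by rewrite mulmxBr mulmx1 mulmxA -hY -hX subrr.
  have : \adj (P *m T) *m (P *m T *m (1%:M - Y *m X)) = 0 by rewrite e mulmx0.
  rewrite mulmxA mul_adj_mx mul_scalar_mx => /matrixP e2.
  apply/eqP; rewrite -subr_eq0 -oppr_eq0 opprB; apply/eqP/matrixP => i j.
  have := e2 i j; rewrite !mxE => /eqP; rewrite mulf_eq0 (negbTE dPT) /= => /eqP ->.
  by [].
have [Yu Xu] := mulmx1_unit YX.
exists (invmx X); split; first by rewrite unitmx_inv.
by rewrite hX mulmxK.
Qed.

Lemma sum_shift (W : zmodType) m r k (F : 'I_m -> W) (idx : 'I_k -> 'I_m) :
  (forall i', val (idx i') = (r + i')%N) -> (r + k)%N = m ->
  (forall i : 'I_m, (i < r)%N -> F i = 0) ->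
  \sum_i F i = \sum_i' F (idx i').
Proof.
move=> hidx hm hF; subst m; rewrite big_split_ord /= big1 ?add0r.
  by apply: eq_bigr => i _; congr F; apply: val_inj; rewrite /= hidx.
by move=> i _; apply: hF; rewrite /= ltn_ord.
Qed.

Lemma lc_unit (R : idomainType) (p : {poly R}) :
  p \is a GRing.unit -> lead_coef p \is a GRing.unit.
Proof. by rewrite poly_unitE => /andP[/eqP hs hu]; rewrite lead_coefE hs. Qed.


Section PolyAct.
Variable V : zmodType.
Variable phi : V -> V.
Hypothesis phi_add : forall u v : V, phi (u + v) = phi u + phi v.

Lemma phi0 : phi 0 = 0.
Proof. by apply: (addrI (phi 0)); rewrite -phi_add !addr0. Qed.
Lemma phiN x : phi (- x) = - phi x.
Proof. by apply/eqP; rewrite -addr_eq0 -phi_add addNr phi0. Qed.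
Lemma phiMn x (n : nat) : phi (x *+ n) = phi x *+ n.
Proof. by elim: n => [|n IH]; rewrite ?mulr0n ?phi0 // !mulrS phi_add IH. Qed.
Lemma phiMz x (n : int) : phi (x *~ n) = phi x *~ n.
Proof. by case: n => n; rewrite ?NegzE ?mulrNz -?pmulrn ?phiN phiMn. Qed.
Lemma phi_sum I r (P : pred I) (F : I -> V) :
  phi (\sum_(i <- r | P i) F i) = \sum_(i <- r | P i) phi (F i).
Proof. exact: (big_morph phi phi_add phi0). Qed.
Lemma iter_add j u v : iter j phi (u + v) = iter j phi u + iter j phi v.
Proof. by elim: j => //= j ->; rewrite phi_add. Qed.
Lemma iter0 j : iter j phi 0 = 0.
Proof. by elim: j => //= j ->; rewrite phi0. Qed.
Lemma iterMz j u n : iter j phi (u *~ n) = iter j phi u *~ n.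
Proof. by elim: j => //= j ->; rewrite phiMz. Qed.

Notation pa := (polyact phi).
Implicit Types (p q : {poly int}) (v : V).

Lemma pa_widen n p v : (size p <= n)%N ->
  pa p v = \sum_(j < n) (iter j phi v) *~ p`_j.
Proof.
move=> hn; rewrite /polyact (big_ord_widen _ (fun j => iter j phi v *~ p`_j) hn) big_mkcond /=.
apply: eq_bigr => j _; case: ifP => // /negbT; rewrite -leqNgt => hj.
by rewrite nth_default // mulrz0.
Qed.

Lemma paD p q v : pa (p + q) v = pa p v + pa q v.
Proof.
set n := maxn (size p) (size q).
rewrite (@pa_widen n p) ?leq_maxl // (@pa_widen n q) ?leq_maxr //.
rewrite (@pa_widen n) ?(leq_trans (size_polyD _ _)) // -big_split /=.
by apply: eq_bigr => j _; rewrite coefD mulrzDr.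
Qed.

Lemma pa0 v : pa 0 v = 0.
Proof. by rewrite /polyact size_poly0 big_ord0. Qed.

Lemma paN p v : pa (- p) v = - pa p v.
Proof. by apply/eqP; rewrite -addr_eq0 -paD addNr pa0. Qed.

Lemma paB p q v : pa (p - q) v = pa p v - pa q v.
Proof. by rewrite paD paN. Qed.

Lemma pa_vD p u v : pa p (u + v) = pa p u + pa p v.
Proof. by rewrite /polyact -big_split; apply: eq_bigr => j _; rewrite iter_add mulrzDl. Qed.

Lemma pa_v0 p : pa p 0 = 0.
Proof. by rewrite /polyact big1 // => j _; rewrite iter0 mul0rz. Qed.

Lemma pa_vN p u : pa p (- u) = - pa p u.
Proof. by apply/eqP; rewrite -addr_eq0 -pa_vD addNr pa_v0. Qed.

Lemma pa_vMz p u n : pa p (u *~ n) = pa p u *~ n.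
Proof.
rewrite /polyact mulrz_suml; apply: eq_bigr => j _.
by rewrite iterMz -!mulrzA mulrC.
Qed.

Lemma pa_vsum p I r (P : pred I) (F : I -> V) :
  pa p (\sum_(i <- r | P i) F i) = \sum_(i <- r | P i) pa p (F i).
Proof. exact: (big_morph (pa p) (pa_vD p) (pa_v0 p)). Qed.

Lemma pa_sum I r (P : pred I) (F : I -> {poly int}) v :
  pa (\sum_(i <- r | P i) F i) v = \sum_(i <- r | P i) pa (F i) v.
Proof. exact: (big_morph (pa^~ v) (fun p q => paD p q v) (pa0 v)). Qed.

Lemma pa_phi p v : pa p (phi v) = phi (pa p v).
Proof.
rewrite /polyact phi_sum; apply: eq_bigr => j _.
by rewrite phiMz -iterSr.
Qed.

Lemma paC c v : pa c%:P v = v *~ c.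
Proof.
rewrite (@pa_widen 1) ?size_polyC ?leq_b1 // big_ord1 coefC /=.
done.
Qed.

Lemma pa1 v : pa 1 v = v.
Proof. by rewrite paC. Qed.

Lemma paMX p v : pa (p * 'X) v = pa p (phi v).
Proof.
rewrite (@pa_widen (size p).+1) ?(leq_trans (size_mul_leq _ _)) ?size_polyX ?addn2 //.
rewrite big_ord_recl coefMX /= mulr0z add0r.
by apply: eq_bigr => j _; rewrite coefMX /= -iterSr.
Qed.

Lemma paX v : pa 'X v = phi v.
Proof. by rewrite -[X in pa X]mul1r paMX pa1. Qed.

Lemma paCM c p v : pa (c%:P * p) v = pa p v *~ c.
Proof.
rewrite (@pa_widen (size p)) ?(leq_trans (size_mul_leq _ _)) ?size_polyC //.
  rewrite /polyact mulrz_suml; apply: eq_bigr => j _.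
  by rewrite coefCM mulrC mulrzA.
by case: (c != 0); rewrite ?addn1 ?addn0 //=; apply: leq_pred.
Qed.

Lemma paM p q v : pa (p * q) v = pa p (pa q v).
Proof.
elim/poly_ind: p v => [|p c IH] v; first by rewrite mul0r !pa0.
rewrite mulrDl paD -mulrA (mulrC 'X) mulrA paMX IH paCM paD paMX paC.
by rewrite pa_phi.
Qed.

Lemma paMC p q v : pa (p * q) v = pa q (pa p v).
Proof. by rewrite mulrC paM. Qed.


Section Pi.
Variable m : nat.
Implicit Types (u w : 'cV[{poly int}]_m).
Definition Pi (g : 'I_m -> V) (u : 'cV[{poly int}]_m) : V :=
  \sum_j pa (u j 0) (g j).
Definition Cm n k (z : 'M[int]_(n, k)) : 'M[{poly int}]_(n, k) := map_mx polyC z.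

Lemma PiD g u w : Pi g (u + w) = Pi g u + Pi g w.
Proof. by rewrite /Pi -big_split; apply: eq_bigr => j _; rewrite mxE paD. Qed.
Lemma Pi0 g : Pi g 0 = 0.
Proof. by rewrite /Pi big1 // => j _; rewrite mxE pa0. Qed.
Lemma PiN g u : Pi g (- u) = - Pi g u.
Proof. by apply/eqP; rewrite -addr_eq0 -PiD addNr Pi0. Qed.
Lemma Pisum g I r (P : pred I) (F : I -> 'cV_m) :
  Pi g (\sum_(i <- r | P i) F i) = \sum_(i <- r | P i) Pi g (F i).
Proof. exact: (big_morph (Pi g) (PiD g) (Pi0 g)). Qed.
Lemma PiZ g p u : Pi g (p *: u) = pa p (Pi g u).
Proof. by rewrite /Pi pa_vsum; apply: eq_bigr => j _; rewrite mxE paM. Qed.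

Lemma PiM g (M : 'M_m) u :
  Pi g (M *m u) = Pi (fun l => Pi g (col l M)) u.
Proof.
rewrite /Pi; under eq_bigr => j _ do rewrite mxE pa_sum.
rewrite exchange_big /=; apply: eq_bigr => l _; rewrite pa_vsum.
by apply: eq_bigr => j _; rewrite mxE paMC.
Qed.

Lemma Pi_eq0 g u : (forall j, g j = 0) -> Pi g u = 0.
Proof. by move=> h; rewrite /Pi big1 // => j _; rewrite h pa_v0. Qed.

Lemma PiC g (z : 'cV[int]_m) : Pi g (Cm z) = \sum_j g j *~ z j 0.
Proof. by apply: eq_bigr => j _; rewrite mxE paC. Qed.

Lemma Pi_ext g g' u : (forall j, g j = g' j) -> Pi g u = Pi g' u.
Proof. by move=> h; apply: eq_bigr => j _; rewrite h. Qed.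

End Pi.

Section Pres.
Variable m : nat.
Variable b : 'I_m -> V.
Variable A : 'M[int]_m.
Hypothesis b_basis : is_Zbasis b.
Hypothesis A_mat : is_matrix_of b phi A.
Let T := char_poly_mx A.
Implicit Types (u w : 'cV[{poly int}]_m).

Lemma Pi_colT j : Pi b (col j T) = 0.
Proof.
rewrite /Pi; under eq_bigr => i _ do rewrite !mxE paB paC.
rewrite sumrB -A_mat (bigD1 j) //= big1 ?addr0 ?eqxx ?mulr1n ?paX ?subrr //.
by move=> i /negbTE ->; rewrite mulr0n pa0.
Qed.

Lemma Pi_T w : Pi b (T *m w) = 0.
Proof. by rewrite PiM; apply: Pi_eq0 => l; rewrite Pi_colT. Qed.

Definition inS (u : 'cV[{poly int}]_m) :=
  exists w (z : 'cV[int]_m), u = T *m w + Cm z.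

Lemma inS_add u u' : inS u -> inS u' -> inS (u + u').
Proof.
move=> [w [z ->]] [w' [z' ->]]; exists (w + w'), (z + z').
rewrite mulmxDr /Cm map_mxD; rewrite -!addrA; congr (_ + _).
by rewrite addrCA.
Qed.
Lemma inS0 : inS 0.
Proof. by exists 0, 0; rewrite mulmx0 /Cm map_mx0 addr0. Qed.

Lemma inSX u : inS u -> inS ('X *: u).
Proof.
move=> [w [z ->]]; exists ('X *: w + Cm z), (A *m z).
rewrite scalerDr mulmxDr -scalemxAr /Cm map_mxM /T /char_poly_mx.
rewrite mulmxBl mul_scalar_mx; rewrite -!addrA; congr (_ + _).
by rewrite mulmxBl mul_scalar_mx subrK.
Qed.

Lemma inSC c u : inS u -> inS (c%:P *: u).
Proof.
move=> [w [z ->]]; exists (c%:P *: w), (c *: z).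
rewrite scalerDr -scalemxAr; congr (_ + _).
by apply/matrixP => i j; rewrite !mxE polyCM.
Qed.

Lemma inSZ p u : inS u -> inS (p *: u).
Proof.
elim/poly_ind: p u => [|p c IH] u hu; first by rewrite scale0r; exact: inS0.
rewrite scalerDl; apply: inS_add; last exact: inSC.
by rewrite -scalerA; apply: IH; apply: inSX.
Qed.

Lemma inS_all u : inS u.
Proof.
rewrite (matrix_sum_delta u); elim/big_ind: _ => //; [exact: inS0|exact: inS_add|].
move=> i _; elim/big_ind: _ => //; [exact: inS0|exact: inS_add|].
move=> j _; apply: inSZ; exists 0, (delta_mx i j).
by rewrite mulmx0 add0r /Cm map_delta_mx.
Qed.

Lemma kerT u : Pi b u = 0 <-> exists w, u = T *m w.
Proof.
split; last by move=> [w ->]; exact: Pi_T.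
have [w [z ->]] := inS_all u.
rewrite PiD Pi_T add0r PiC => hz; exists w.
suff -> : z = 0 by rewrite /Cm map_mx0 addr0.
case: b_basis => _ /(_ (fun j => z j 0) (fun _ => 0)) hind.
apply/matrixP => i j; rewrite (ord1 j) mxE; apply: hind.
by rewrite hz big1 // => k _; rewrite mulr0z.
Qed.




Lemma Pidelta (g : 'I_m -> V) (i : 'I_m) : Pi g (delta_mx i 0) = g i.
Proof.
rewrite /Pi (bigD1 i) //= big1 ?addr0 ?mxE ?eqxx ?pa1 //.
by move=> j /negbTE hj; rewrite mxE hj pa0.
Qed.

Lemma snf_rcf : has_SNF T -> has_RCF phi.
Proof.
move=> [P [Q [Pu Qu offd divs]]].
set D := P *m T *m Q in offd divs.
pose s i := D i i.
have Ddiag : D = diag_mx (\row_i s i).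
  apply/matrixP => i j; rewrite [RHS]mxE [X in X *+ _]mxE; case: eqVneq => [<-|ne].
    by rewrite mulr1n.
  by rewrite offd // mulr0n.
have lcu : forall i, lead_coef (s i) \is a GRing.unit.
  have hdet : \det D = \det P * char_poly A * \det Q by rewrite !det_mulmx.
  have : lead_coef (\det D) \is a GRing.unit.
    rewrite hdet !lead_coefM (monicP (char_poly_monic A)) mulr1 unitrM.
    by rewrite !lc_unit // -unitmxE.
  rewrite Ddiag det_diag lead_coef_prod => hu i.
  by move: hu; rewrite (bigD1 i) //= unitrM mxE => /andP[].
have s0 i : s i != 0.
  by apply: contraTneq (lcu i) => ->; rewrite lead_coef0 unitr0.
pose g l := Pi b (col l (invmx P)).
have Pig u : Pi g u = Pi b (invmx P *m u) by rewrite PiM.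
have kerg u : Pi g u = 0 <-> forall i, divides (s i) (u i 0).
  rewrite Pig kerT; split.
    move=> [w hw] i; have hu : u = D *m (invmx Q *m w).
      by rewrite /D -mulmxA mulKVmx // -mulmxA -hw mulKVmx.
    by exists ((invmx Q *m w) i 0); rewrite hu Ddiag mul_diag_mx !mxE mulrC.
  move=> hd; have /all_sig [c hc] : forall i, {c | u i 0 = c * s i}.
    by move=> i; apply: constructive_indefinite_description; apply: hd.
  exists (Q *m \col_i c i); have -> : u = D *m \col_i c i.
    by apply/matrixP => i j; rewrite (ord1 j) Ddiag mul_diag_mx !mxE hc mulrC.
  by rewrite /D -!mulmxA mulKmx.
have kerd p i : pa p (g i) = 0 <-> divides (s i) p.
  rewrite -Pidelta -PiZ kerg; split.
    by move/(_ i); rewrite !mxE !eqxx mulr1.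
  move=> hd j; rewrite !mxE; case: eqVneq => [->|_]; first by rewrite mulr1.
  by exists 0; rewrite mulr0 mul0r.
pose nonconst i := (1 < size (s i))%N.
have mono : forall d (i j : 'I_m), val j = (val i + d)%N -> nonconst i -> nonconst j.
  elim=> [|d IH] i j hj hi.
    by have -> : j = i by apply: val_inj; rewrite hj addn0.
  have hj' : (j.-1 < m)%N by apply: leq_ltn_trans (leq_pred j) (ltn_ord j).
  have h : nonconst (Ordinal hj') by apply: (IH i) => //=; rewrite hj addnS.
  have [c hc] := divs (Ordinal hj') j ltac:(by rewrite /= hj addnS).
  rewrite /nonconst /s hc; have c0 : c != 0.
    by apply: contra_neq (s0 j) => c0; rewrite /s hc c0 mul0r.
  rewrite size_mul // ?s0 //; move: h; rewrite /nonconst /s.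
  have : (0 < size c)%N by rewrite size_poly_gt0.
  by case: (size c) => // n _; rewrite addSn /= => h; apply: leq_trans h _; rewrite leq_addl.
pose r := (\max_(i | ~~ nonconst i) (nat_of_ord i).+1)%N.
have hr : forall i : 'I_m, nonconst i = (r <= i)%N.
  move=> i; apply/idP/idP => [hi|hri].
    apply/bigmax_leqP => j hj; rewrite ltnNge; apply: contra hj => hij.
    by apply: (mono (j - i)%N i j) => //; rewrite subnKC.
  apply: contraLR hri => hi; rewrite -ltnNge.
  by rewrite /r; apply: (@leq_bigmax_cond _ _ (fun i : 'I_m => (nat_of_ord i).+1) _ hi).
have hrm : (r <= m)%N by apply/bigmax_leqP => j _; exact: ltn_ord.
pose k := (m - r)%N.
have hk : (r + k)%N = m by rewrite subnKC.
have idxP (i : 'I_k) : (r + i < m)%N by rewrite -[X in (_ < X)%N]hk ltn_add2l ltn_ord.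
pose idx i := Ordinal (idxP i).
have idxinj : injective idx.
  by move=> i j /(congr1 val) /= /addnI h; apply: val_inj.
have gz (i : 'I_m) : (i < r)%N -> g i = 0.
  move=> hi; have hnc : ~~ nonconst i by rewrite hr -ltnNge.
  have hs : s i = ((s i)`_0)%:P by apply: size1_polyC; rewrite leqNgt.
  rewrite -(pa1 (g i)); apply/kerd; exists (((s i)`_0)^-1)%:P.
  have hu := lcu i; rewrite hs lead_coefC in hu.
  by rewrite {2}hs -polyCM mulVr.
pose li i := lead_coef (s (idx i)).
have liu i : li i \is a GRing.unit by apply: lcu.
have li0 i : li i != 0 by apply: contraTneq (liu i) => ->; rewrite unitr0.
exists k, (fun i => g (idx i)), (fun i => (li i)^-1%:P * s (idx i)); split.
- move=> i; split; first by rewrite monicE lead_coefM lead_coefC mulVr.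
  have h : nonconst (idx i) by rewrite hr /= leq_addr.
  rewrite size_Cmul // invr_eq0; exact: li0.
- move=> i j hij; have [c hc] := divs (idx i) (idx j) ltac:(by rewrite /= hij addnS).
  exists ((li j)^-1%:P * c * (li i)%:P); rewrite /s hc -!mulrA.
  by congr (_ * (_ * _)); rewrite mulrA -polyCM mulrV // mul1r.
- move=> i p; split.
    move=> /(_ 1); rewrite pa1 => /kerd [c hc]; exists (c * (li i)%:P).
    by rewrite hc -mulrA; congr (_ * _); rewrite mulrA -polyCM mulrV // mul1r.
  move=> [c hc] q; rewrite -paM; apply/kerd; exists (c * (li i)^-1%:P * q).
  by rewrite hc -!mulrA; congr (_ * (_ * _)); rewrite mulrC.
- move=> v; have [z hz] := b_basis.1 v.
  pose zc : 'cV[int]_m := \col_j z j.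
  exists (fun i => (P *m Cm zc) (idx i) 0).
  have e : \sum_j b j *~ z j = Pi g (P *m Cm zc).
    by rewrite Pig mulKmx // PiC; apply: eq_bigr => j _; rewrite mxE.
  rewrite hz e /Pi; apply: (sum_shift (F := fun j => pa ((P *m Cm zc) j 0) (g j))) => //.
  by move=> i hi; rewrite gz // pa_v0.
- move=> ps qs heq i.
  pose u := \sum_i' (ps i' - qs i') *: delta_mx (idx i') (0 : 'I_1).
  have hu0 : Pi g u = 0.
    rewrite Pisum; under eq_bigr do rewrite PiZ Pidelta paB.
    by rewrite sumrB heq subrr.
  have := (kerg u).1 hu0 (idx i).
  have -> : u (idx i) 0 = ps i - qs i.
    rewrite summxE (bigD1 i) //= big1 => [|j hj]; rewrite !mxE ?eqxx ?mulr1 ?addr0 //.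
    by rewrite (inj_eq idxinj) eq_sym (negbTE hj) mulr0.
  by move/kerd; rewrite paB => /eqP; rewrite subr_eq0 => /eqP.
Qed.

Section RCFsec.
Variable k : nat.
Variable g : 'I_k -> V.
Variable a : 'I_k -> {poly int}.
Hypothesis Ha : forall i, (a i \is monic) /\ (1 < size (a i))%N.
Hypothesis Hdiv : forall i j : 'I_k, nat_of_ord j = (nat_of_ord i).+1 -> divides (a i) (a j).
Hypothesis Hann : forall i (p : {poly int}),
  (forall q : {poly int}, pa p (pa q (g i)) = 0) <-> divides (a i) p.
Hypothesis Hspan : forall v : V, exists ps : 'I_k -> {poly int},
  v = \sum_(i < k) pa (ps i) (g i).
Hypothesis Hdir : forall ps qs : 'I_k -> {poly int},
  \sum_(i < k) pa (ps i) (g i) = \sum_(i < k) pa (qs i) (g i) ->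
  forall i, pa (ps i) (g i) = pa (qs i) (g i).

Definition ee (i : 'I_k) := ((size (a i)).-2)%N.
Local Notation o := (oo ee).
Local Notation J := (JJ ee).

Lemma size_a i : size (a i) = (ee i).+2.
Proof. by have [_ h] := Ha i; rewrite /ee; case: (size (a i)) h => [|[|n]]. Qed.

Lemma ann_a i p : pa p (g i) = 0 <-> divides (a i) p.
Proof.
rewrite -Hann; split; last by move/(_ 1); rewrite pa1.
by move=> h q; rewrite -paM mulrC paM h pa_v0.
Qed.

Lemma div_size i p : divides (a i) p -> (size p <= (ee i).+1)%N -> p = 0.
Proof.
move=> [c ->]; have [->|c0] := eqVneq c 0; first by rewrite mul0r.
have a0 : a i != 0 by rewrite -size_poly_gt0 size_a.
rewrite size_mul // size_a addnS /= => h; exfalso.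
have : (0 < size c)%N by rewrite size_poly_gt0.
by case: (size c) h => // n; rewrite addSn ltnNge leq_addl.
Qed.

Definition sel (W : zmodType) (G : 'I_k -> nat -> W) (H : 'I_k -> W) (l : nat) : W :=
  \sum_i (\sum_(t < ee i) (if l == (o i + t)%N then G i t else 0)
          + (if l == (J + i)%N then H i else 0)).

Lemma sel_o (W : zmodType) G (H : 'I_k -> W) i (t : nat) : (t < ee i)%N ->
  sel G H (o i + t) = G i t.
Proof.
move=> ht.
have hJ : forall i' : 'I_k, (o i + t == J + i')%N = false.
  by move=> i'; apply/negbTE; rewrite neq_ltn (leq_trans (oo_lt ht)) ?leq_addr.
rewrite /sel (bigD1 i) //= addrC big1 ?add0r.
  rewrite (bigD1 (Ordinal ht)) //= eqxx addrC big1 ?add0r.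
  by have := hJ i; case: eqP => // _; rewrite addr0.
  move=> t' ht'; case: eqP => // h.
  have [_ /eqP] := oo_inj ht (ltn_ord t') h.
  by move: ht'; rewrite -(inj_eq val_inj) /= eq_sym => /negbTE ->.
move=> i' hi'; rewrite big1 ?add0r ?hJ //.
move=> t' _; case: eqP => // h.
by have [/eqP] := oo_inj ht (ltn_ord t') h; rewrite eq_sym (negbTE hi').
Qed.

Lemma sel_J (W : zmodType) G (H : 'I_k -> W) (i : 'I_k) : sel G H (J + i) = H i.
Proof.
have hlt : forall i' (t : 'I_(ee i')), (J + i == o i' + t)%N = false.
  move=> i' t; apply/negbTE; rewrite neq_ltn; apply/orP; right.
  by rewrite (leq_trans (oo_lt (ltn_ord t))) ?leq_addr.
rewrite /sel (bigD1 i) //= big1 ?add0r ?eqxx.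
  rewrite big1 ?addr0 // => j hj; rewrite big1 ?add0r.
    by rewrite eqn_add2l; case: eqP => // /val_inj h; rewrite h eqxx in hj.
  by move=> t _; rewrite hlt.
by move=> t _; rewrite hlt.
Qed.

Definition cn (l : nat) : V := sel (fun i t => iter t.+1 phi (g i)) g l.

Lemma pa_reduce i p : pa p (g i) = pa (Pdiv.Ring.rmodp p (a i)) (g i).
Proof.
rewrite {1}(Pdiv.RingMonic.rdivp_eq (Ha i).1 p) paD paM.
have -> : pa (a i) (g i) = 0 by apply/ann_a; exists 1; rewrite mul1r.
by rewrite pa_v0 add0r.
Qed.

Lemma size_rmod i p : (size (Pdiv.Ring.rmodp p (a i)) <= (ee i).+1)%N.
Proof.
have a0 : a i != 0 by rewrite -size_poly_gt0 size_a.
by move: (Pdiv.Ring.ltn_rmodp p (a i)); rewrite a0 size_a ltnS.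
Qed.

Lemma pa_sum_iter i p : (size p <= (ee i).+1)%N ->
  pa p (g i) = \sum_(t < ee i) iter t.+1 phi (g i) *~ p`_t.+1 + g i *~ p`_0.
Proof.
move=> h; rewrite (pa_widen _ h) big_ord_recl addrC /=. 
by congr (_ + _); apply: eq_bigr => t _; rewrite add0n.
Qed.

Lemma c_basis N : N = (J + k)%N -> is_Zbasis (fun l : 'I_N => cn l).
Proof.
move=> ->; split.
  move=> v; have [ps ->] := Hspan v.
  pose r i := Pdiv.Ring.rmodp (ps i) (a i).
  exists (fun l : 'I_(J + k) => sel (fun i t => (r i)`_t.+1) (fun i => (r i)`_0) l).
  rewrite (R1 ee _ (fun l => cn l *~ sel (fun i t => (r i)`_t.+1) (fun i => (r i)`_0) l)).
  apply: eq_bigr => i _; rewrite pa_reduce (pa_sum_iter (size_rmod _ _)).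
  congr (_ + _); last by rewrite /cn !sel_J.
  by apply: eq_bigr => t _; rewrite /cn !sel_o.
move=> z z' hzz l.
pose y (l : 'I_(J + k)) := z l - z' l.
pose yn (n : nat) := \sum_(l < J + k | val l == n) y l.
have yn_val (l' : 'I_(J + k)) : yn l' = y l'.
  rewrite /yn (eq_bigl (pred1 l')) ?big_pred1_eq // => l''.
have h0 : \sum_(l < J + k) cn l *~ yn l = 0.
  rewrite (eq_bigr (fun l : 'I_(J + k) => cn l *~ z l - cn l *~ z' l)).
    by rewrite sumrB hzz subrr.
  by move=> l' _; rewrite yn_val mulrzBr.
rewrite (R1 ee _ (fun l => cn l *~ yn l)) in h0.
pose pl i := \poly_(s < (ee i).+1) (if s == 0%N then yn (J + i)%N else yn (o i + s.-1)%N).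
have hpl i : pa (pl i) (g i) =
    \sum_(t < ee i) cn (o i + t) *~ yn (o i + t)%N + cn (J + i) *~ yn (J + i)%N.
  rewrite (pa_sum_iter (size_poly _ _)) coef_poly /=; congr (_ + _).
    by apply: eq_bigr => t _; rewrite coef_poly ltnS ltn_ord /= /cn sel_o.
  by rewrite /cn sel_J.
have hpl0 i : pl i = 0.
  have e : \sum_i pa (pl i) (g i) = \sum_i pa 0 (g i).
    by rewrite (eq_bigr _ (fun i _ => hpl i)) h0 big1 // => i' _; rewrite pa0.
  move: (Hdir e i); rewrite pa0 => /ann_a hd; exact: div_size hd (size_poly _ _).
have ycoef (i : 'I_k) : yn (J + i)%N = 0 /\ forall t, (t < ee i)%N -> yn (o i + t)%N = 0.
  split; first by have := congr1 (fun p => p`_0) (hpl0 i); rewrite coef_poly coef0.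
  move=> t ht; have := congr1 (fun p => p`_t.+1) (hpl0 i).
  by rewrite coef_poly coef0 ltnS ht.
have : (\sum_(l < J + k) ((yn l != 0) : nat))%N = 0%N.
  rewrite (R1 ee _ (fun l => ((yn l != 0) : nat))) big1 // => i _.
  rewrite big1 ?add0n; first by have [-> _] := ycoef i.
  by move=> t _; have [_ ->] := ycoef i.
move/eqP; rewrite sum_nat_eq0 => /forallP /(_ l); rewrite yn_val eqb0 negbK.
by rewrite /y subr_eq0 => /eqP.
Qed.

Lemma sel0 (W : zmodType) (H : 'I_k -> W) l :
  sel (fun _ _ => 0) H l = \sum_(i < k) (if l == (J + i)%N then H i else 0).
Proof. by apply: eq_bigr => i _; rewrite big1 ?add0r // => t _; case: ifP. Qed.

Lemma sum_pickJ (W : zmodType) (F : 'I_k -> W) (i0 : 'I_k) :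
  \sum_(i < k) (if (J + i0 == J + i)%N then F i else 0) = F i0.
Proof.
rewrite (bigD1 i0) //= eqxx big1 ?addr0 // => i hi.
by rewrite eqn_add2l; case: eqP => // /val_inj h; rewrite h eqxx in hi.
Qed.

Lemma paXn n v : pa 'X^n v = iter n phi v.
Proof. by elim: n v => [|n IH] v; rewrite ?expr0 ?pa1 // exprS paM IH paX. Qed.

Definition dn (l : nat) : {poly int} :=
  if (l < J)%N then 1 else \sum_(i < k) (if l == (J + i)%N then a i else 0).

Lemma dn_J (i : 'I_k) : dn (J + i) = a i.
Proof. by rewrite /dn ltnNge leq_addr /= sum_pickJ. Qed.

Lemma dn_lt l : (l < J)%N -> dn l = 1.
Proof. by rewrite /dn => ->. Qed.

Lemma sum_pick (W : zmodType) (n pp : nat) (h : (pp < n)%N) (F : 'I_n -> W) :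
  \sum_(l < n) (if val l == pp then F l else 0) = F (Ordinal h).
Proof.
rewrite (bigD1 (Ordinal h)) //= eqxx big1 ?addr0 // => l hl.
case: eqP => // hv; exfalso; move: hl; rewrite -(inj_eq val_inj) /= hv eqxx.
by [].
Qed.

Section Final.
Hypothesis hm : m = (J + k)%N.

Lemma posP (i : 'I_k) : (J + i < m)%N.
Proof. by rewrite hm ltn_add2l. Qed.
Definition pos i := Ordinal (posP i).

Definition g' (l : 'I_m) : V := sel (fun _ _ => 0) g l.
Definition DD : 'M[{poly int}]_m := diag_mx (\row_(l < m) dn l).

Lemma Pig' u : Pi g' u = \sum_i pa (u (pos i) 0) (g i).
Proof.
rewrite /Pi; under eq_bigr => l _ do rewrite /g' sel0 pa_vsum.
rewrite exchange_big /=; apply: eq_bigr => i _.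
rewrite -(sum_pick (posP i) (fun l => pa (u l 0) (g i))).
by apply: eq_bigr => l _; case: ifP => _; rewrite ?pa_v0.
Qed.

Lemma decomp (l : 'I_m) : ~~ (l < J)%N -> {i : 'I_k | val l = (J + i)%N}.
Proof.
rewrite -leqNgt => hl.
have h : (l - J < k)%N by rewrite ltn_subLR // -hm ltn_ord.
by exists (Ordinal h); rewrite /= subnKC.
Qed.

Lemma kerD u : Pi g' u = 0 <-> exists w, u = DD *m w.
Proof.
rewrite Pig'; split; last first.
  move=> [w ->]; rewrite big1 // => i _.
  by rewrite /DD mul_diag_mx !mxE /= dn_J paMC (proj2 (ann_a i (a i))) ?pa_v0 //; exists 1; rewrite mul1r.
move=> h0.
have e : \sum_i pa (u (pos i) 0) (g i) = \sum_i pa 0 (g i).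
  by rewrite h0 big1 // => i _; rewrite pa0.
have /all_sig [q hq] : forall i, {q | u (pos i) 0 = q * a i}.
  move=> i; apply: constructive_indefinite_description; apply/ann_a.
  by rewrite (Hdir e) pa0.
exists (\col_l (if (l < J)%N then u l 0 else \sum_(i < k) (if val l == (J + i)%N then q i else 0))).
apply/matrixP => l j; rewrite (ord1 j) /DD mul_diag_mx !mxE.
case: ifP => hl; first by rewrite dn_lt // mul1r.
have [i hi] := decomp (negbT hl); have hi' : nat_of_ord l = (J + i)%N by [].
rewrite hi hi' dn_J sum_pickJ mulrC -hq.
by congr (u _ 0); apply: val_inj.
Qed.

Definition N0 : 'M[{poly int}]_m := \matrix_(l', l)
  \sum_(i < k) (if (l' : nat) == (J + i)%N
          then \sum_(t < ee i) (if (l : nat) == (o i + t)%N then 'X^(t.+1) else 0) else 0).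
Definition P0 : 'M[{poly int}]_m := 1%:M + N0.

Lemma N0_sq : N0 *m N0 = 0.
Proof.
apply/matrixP => l' l; rewrite !mxE big1 // => l'' _.
case: (ltnP l'' J) => hl.
  rewrite [N0 l'' l]mxE big1 ?mulr0 // => i _.
  by rewrite ifF //; apply/negbTE; rewrite neq_ltn (leq_trans hl) ?leq_addr.
rewrite [N0 l' l'']mxE big1 ?mul0r // => i _; case: ifP => // _.
rewrite big1 // => t _; rewrite ifF //; apply/negbTE; rewrite neq_ltn.
by rewrite (leq_trans (oo_lt (ltn_ord t)) hl) orbT.
Qed.

Lemma P0_unit : P0 \in unitmx.
Proof.
have h : P0 *m (1%:M - N0) = 1%:M.
  by rewrite /P0 mulmxBr mulmx1 mulmxDl mul1mx N0_sq addr0 addrK.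
by have [] := mulmx1_unit h.
Qed.

Lemma PiP0 l : Pi g' (col l P0) = cn l.
Proof.
rewrite Pig' /cn /sel; apply: eq_bigr => i _.
rewrite !mxE paD addrC; congr (_ + _).
  rewrite /= sum_pickJ pa_sum; apply: eq_bigr => t _.
  by case: ifP => _; rewrite ?pa0 // paXn.
rewrite eq_sym -(inj_eq val_inj) /=.
by case: eqP => _; rewrite ?pa0 ?pa1.
Qed.

Lemma snf_final : has_SNF T.
Proof.
pose c' (l : 'I_m) := cn l.
have cb : is_Zbasis c' by apply: c_basis.
have [S hS] := coords b cb.
have [S2 hS2] := coords c' b_basis.
have e := basis_id b_basis (comp_coords hS2 hS).
have [_ Su] := mulmx1_unit e.
have CSu : Cm S \in unitmx.
  by rewrite unitmxE /Cm det_map_mx rmorph_unit // -unitmxE.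
pose P := P0 *m Cm S.
have Pu : P \in unitmx by rewrite unitmx_mul P0_unit.
have hP u : Pi g' (P *m u) = Pi b u.
  rewrite -mulmxA PiM (@Pi_ext _ _ c'); last by move=> l; rewrite PiP0.
  rewrite PiM; apply: Pi_ext => j; rewrite hS /Pi.
  by apply: eq_bigr => l _; rewrite !mxE paC.
have dT : \det T != 0 by apply: monic_neq0; apply: char_poly_monic.
have [Q [Qu hQ]] : exists Q, Q \in unitmx /\ P *m T *m Q = DD.
  apply: equiv_images => // w.
    by apply/kerD; rewrite hP Pi_T.
  have : Pi g' (DD *m w) = 0 by apply/kerD; exists w.
  rewrite -(mulKVmx Pu (DD *m w)) hP => /kerT [w' hw'].
  by exists w'; rewrite -hw' mulKVmx.
exists P, Q; split => //; rewrite hQ /DD.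
  by move=> i j hij; rewrite !mxE (negbTE hij) mulr0n.
move=> i j hij; rewrite !mxE !eqxx !mulr1n.
case: (ltnP j J) => hj.
  have hi : (i < J)%N by apply: leq_trans hj; rewrite hij.
  by rewrite !dn_lt //; exists 1; rewrite mul1r.
case: (ltnP i J) => hi.
  by rewrite (dn_lt hi); exists (dn j); rewrite mulr1.
have [i0 hi0] := decomp (l := i) ltac:(by rewrite -leqNgt).
have hi1 : (i0.+1 < k)%N.
  by have := ltn_ord j; rewrite hij hi0 hm -addnS ltn_add2l.
have e1 : nat_of_ord i = (J + i0)%N by [].
have e2 : nat_of_ord j = (J + Ordinal hi1)%N by rewrite hij e1 addnS.
by rewrite e1 e2 !dn_J; apply: Hdiv.
Qed.

End Final.

End RCFsec.

Lemma rcf_snf : has_RCF phi -> has_SNF T.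
Proof.
move=> [k [g [a [Ha Hdiv Hann Hspan Hdir]]]].
have hm := basis_size b_basis (c_basis Ha Hann Hspan Hdir (erefl _)).
exact: (snf_final Ha Hdiv Hann Hspan Hdir hm).
Qed.
End Pres.
End PolyAct.

Theorem mainTheorem1 (V : zmodType) (m : nat) (b : 'I_m -> V) (phi : V -> V)
    (A : 'M[int]_m)
    (phi_add : forall u v : V, phi (u + v) = phi u + phi v)
    (b_basis : is_Zbasis b)
    (A_mat : is_matrix_of b phi A) :
  has_RCF phi <-> has_SNF (char_poly_mx A).
Proof.
split; first exact: (rcf_snf phi_add b_basis A_mat).
exact: (snf_rcf phi_add b_basis A_mat).
Qed.
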